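(* Let $0<\epsilon<\pi/2$. For the navigation model with parameter $\epsilon$, every configuration of $\mathscr{C}'$ is $1$-looping.
   Context: $d=2$; a marked point is $x=(\xi,u)\in\mathbb{R}^2\times[0,1]$. Navigation model with parameter $\epsilon$: for $x=(\xi,u)$ let $C(x)=\xi+\{(r\cos\beta,r\sin\beta):r>0,\ |\beta-2\pi u|<\epsilon\}$; for a locally finite configuration $\varphi\subset\mathbb{R}^2\times[0,1]$ and $x\in\varphi$, $h(\varphi,x)$ is the marked point of $\varphi$ whose location is the unique closest point to $\xi$ (Euclidean norm) among the locations of points of $\varphi$ lying in $C(x)$; $\mathscr{C}'$ is the set of configurations for which these closest points exist and are unique for every $x\in\varphi$. Graph edges $x\to h(\varphi,x)$; $\mathrm{For}(x,\varphi)=\{x,h(\varphi,x),h(\varphi,h(\varphi,x)),\dots\}$; $\mathrm{Back}(x,\varphi)=\{y\in\varphi:x\in\mathrm{For}(y,\varphi)\}$. $k$-looping: $\varphi\in\mathscr{C}'$ is $k$-looping if for every $x\in\varphi$ there is an open ball $A_x\subset(\mathbb{R}^2\times[0,1])^k$ such that for all $(x_1,\dots,x_k)\in A_x$ (with $\varphi\cup\{x_1,\dots,x_k\}\in\mathscr{C}'$): (i) $\mathrm{For}(x,\varphi\cup\{x_1,\dots,x_k\})\subset\{x,x_1,\dots,x_k\}$; (ii) each $x_i$ lies in the connected component of $x$ in the graph on $\varphi\cup\{x_1,\dots,x_k\}$ and $\mathrm{For}(x_i,\varphi\cup\{x_1,\dots,x_k\})\subset\{x,x_1,\dots,x_k\}$;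 (iii) every $y\in\varphi\setminus\{x\}$ with $h(\varphi\cup\{x_1,\dots,x_k\},y)\ne h(\varphi,y)$ satisfies $h(\varphi\cup\{x_1,\dots,x_k\},y)\in\mathrm{Back}(x,\varphi\cup\{x_1,\dots,x_k\})\cap\{x,x_1,\dots,x_k\}$. *)

(* Defs.v *)
From Stdlib Require Import Reals Lra.
Open Scope R_scope.

(** A marked point x = (xi, u) in R^2 x [0,1]: location (px, py), mark mk. *)
Record MP : Type := mkMP { px : R; py : R; mk : R }.

Definition ldist (x y : MP) : R :=
  sqrt ((px x - px y)^2 + (py x - py y)^2).

Definition dist3sq (x y : MP) : R :=
  (px x - px y)^2 + (py x - py y)^2 + (mk x - mk y)^2.

(** Configurations: subsets of R^2 x [0,1] that are locally finite
    (every bounded region of R^2 contains finitely many points). *)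
Definition config (phi : MP -> Prop) : Prop :=
  (forall y, phi y -> 0 <= mk y <= 1) /\
  (forall Rad : R, exists l : list MP,
     forall y, phi y -> sqrt (px y ^ 2 + py y ^ 2) <= Rad -> List.In y l).

Definition in_cone (eps : R) (x : MP) (p1 p2 : R) : Prop :=
  exists r b : R, 0 < r /\ Rabs (b - 2 * PI * mk x) < eps /\
    p1 = px x + r * cos b /\ p2 = py x + r * sin b.

Definition in_coneP (eps : R) (x y : MP) : Prop := in_cone eps x (px y) (py y).

(** [is_h eps phi x y] : y = h(phi, x), i.e. y is the point of phi in C(x)
    whose location is strictly closer to xi than that of every other point of
    phi in C(x) (existence and uniqueness of the closest point). *)
Definition is_h (eps : R) (phi : MP -> Prop) (x y : MP) : Prop :=
  phi y /\ in_coneP eps x y /\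
  (forall z, phi z -> in_coneP eps x z -> z <> y -> ldist x y < ldist x z).

Definition Cprime (eps : R) (phi : MP -> Prop) : Prop :=
  config phi /\ forall x, phi x -> exists y, is_h eps phi x y.

Inductive For (eps : R) (phi : MP -> Prop) (x : MP) : MP -> Prop :=
  | For_refl : For eps phi x x
  | For_step : forall y z, For eps phi x y -> is_h eps phi y z -> For eps phi x z.

Definition Back (eps : R) (phi : MP -> Prop) (x y : MP) : Prop :=
  phi y /\ For eps phi y x.

Inductive conn (eps : R) (phi : MP -> Prop) (x : MP) : MP -> Prop :=
  | conn_refl : conn eps phi x x
  | conn_fwd : forall y z, conn eps phi x y -> phi y -> is_h eps phi y z -> conn eps phi x z
  | conn_bwd : forall y z, conn eps phi x y -> phi z -> is_h eps phi z y -> conn eps phi x z.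

Definition add_pts (phi : MP -> Prop) (k : nat) (xs : nat -> MP) (y : MP) : Prop :=
  phi y \/ exists i, (i < k)%nat /\ y = xs i.

Definition in_new (x : MP) (k : nat) (xs : nat -> MP) (y : MP) : Prop :=
  y = x \/ exists i, (i < k)%nat /\ y = xs i.

Definition in_ball (k : nat) (cs : nat -> MP) (rho : R) (xs : nat -> MP) : Prop :=
  sum_f_R0 (fun i => if Nat.ltb i k then dist3sq (xs i) (cs i) else 0) k < rho ^ 2.

Definition ball_in_space (k : nat) (cs : nat -> MP) (rho : R) : Prop :=
  0 < rho /\ forall xs, in_ball k cs rho xs -> forall i, (i < k)%nat -> 0 <= mk (xs i) <= 1.

Definition k_looping (eps : R) (k : nat) (phi : MP -> Prop) : Prop :=
  Cprime eps phi /\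
  forall x, phi x ->
    exists (cs : nat -> MP) (rho : R), ball_in_space k cs rho /\
      forall xs : nat -> MP, in_ball k cs rho xs ->
        let phi' := add_pts phi k xs in
        Cprime eps phi' ->
        (forall y, For eps phi' x y -> in_new x k xs y) /\
        (forall i, (i < k)%nat ->
           conn eps phi' x (xs i) /\
           (forall y, For eps phi' (xs i) y -> in_new x k xs y)) /\
        (forall y z z', phi y -> y <> x -> is_h eps phi y z -> is_h eps phi' y z' ->
           z' <> z -> Back eps phi' x z' /\ in_new x k xs z').

(* Main.v *)
Require Import Defs.
From Stdlib Require Import Reals Lra Lia Classical.
Open Scope R_scope.

Definition sq (x y : MP) : R := (px x - px y)^2 + (py x - py y)^2.

Lemma sq_ge0 x y : 0 <= sq x y.
Proof. unfold sq. pose proof (pow2_ge_0 (px x - px y)); pose proof (pow2_ge_0 (py x - py y)); lra. Qed.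

Lemma ldist_sq x y : ldist x y = sqrt (sq x y).
Proof. reflexivity. Qed.

Lemma ldist_lt x y z w : ldist x y < ldist z w -> sq x y < sq z w.
Proof. rewrite !ldist_sq. apply sqrt_lt_0_alt. Qed.

Lemma cos_sin_1 t : cos t ^ 2 + sin t ^ 2 = 1.
Proof. pose proof (sin2_cos2 t). unfold Rsqr in H. nra. Qed.

Lemma cone_sq eps x y : in_coneP eps x y -> 0 < sq x y.
Proof.
  intros [r [b [Hr [_ [H1 H2]]]]]. unfold sq. rewrite H1, H2.
  replace ((px x - (px x + r * cos b)) ^ 2 + (py x - (py x + r * sin b)) ^ 2)
    with (r^2 * (cos b ^ 2 + sin b ^ 2)) by ring.
  rewrite cos_sin_1. nra.
Qed.

Lemma h_uniq eps P y z1 z2 : is_h eps P y z1 -> is_h eps P y z2 -> z1 = z2.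
Proof.
  intros [P1 [C1 H1]] [P2 [C2 H2]].
  destruct (classic (z1 = z2)) as [e|n]; auto.
  pose proof (H1 z2 P2 C2 (fun e => n (eq_sym e))).
  pose proof (H2 z1 P1 C1 n). lra.
Qed.

Lemma for_two eps P a b y : is_h eps P a b -> is_h eps P b a -> For eps P a y -> y = a \/ y = b.
Proof.
  intros Hab Hba HF. induction HF as [|y z HF IH Hz].
  - left; auto.
  - destruct IH as [-> | ->].
    + right. eapply h_uniq; eauto.
    + left. eapply h_uniq; eauto.
Qed.

Lemma pow2_gt_0 t : t <> 0 -> 0 < t^2.
Proof. intros. pose proof (Rsqr_pos_lt t H). unfold Rsqr in H0. lra. Qed.

Lemma sq_abs t S rho : t^2 <= S -> S < rho^2 -> 0 < rho -> Rabs t < rho.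
Proof.
  intros. destruct (Rlt_or_le (Rabs t) rho); auto.
  rewrite <- pow2_abs in H. nra.
Qed.

Lemma list_sep x (l : list MP) : exists M, 0 < M /\ forall y, List.In y l -> sq x y < M -> px y = px x /\ py y = py x.
Proof.
  induction l as [|a l IH].
  - exists 1. split. lra. intros y [].
  - destruct IH as [M0 [HM0 H0]].
    destruct (Req_dec_T (px a) (px x)) as [e1|n1];
    [destruct (Req_dec_T (py a) (py x)) as [e2|n2]|].
    + exists M0. split; auto. intros y [<-|Hy] Hs; auto.
    + assert (0 < sq x a). { unfold sq. assert (py x - py a <> 0) by lra.
        pose proof (pow2_gt_0 _ H). pose proof (pow2_ge_0 (px x - px a)); pose proof (pow2_ge_0 (py x - py a)); lra. }
      exists (Rmin M0 (sq x a)). split. apply Rmin_pos; auto.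
      intros y [<-|Hy] Hs. pose proof (Rmin_r M0 (sq x a)); lra.
      apply H0; auto. pose proof (Rmin_l M0 (sq x a)); lra.
    + assert (0 < sq x a). { unfold sq. assert (px x - px a <> 0) by lra.
        pose proof (pow2_gt_0 _ H). pose proof (pow2_ge_0 (px x - px a)); pose proof (pow2_ge_0 (py x - py a)); lra. }
      exists (Rmin M0 (sq x a)). split. apply Rmin_pos; auto.
      intros y [<-|Hy] Hs. pose proof (Rmin_r M0 (sq x a)); lra.
      apply H0; auto. pose proof (Rmin_l M0 (sq x a)); lra.
Qed.

Lemma sqrt_sum_le a b : sqrt (a^2 + b^2) <= Rabs a + Rabs b.
Proof.
  rewrite <- (sqrt_pow2 (Rabs a + Rabs b)).
  2: pose proof (Rabs_pos a); pose proof (Rabs_pos b); lra.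
  apply sqrt_le_1_alt. rewrite <- (pow2_abs a), <- (pow2_abs b).
  pose proof (Rabs_pos a); pose proof (Rabs_pos b); nra.
Qed.

Lemma sep phi x : config phi -> exists M, 0 < M /\ forall y, phi y -> sq x y < M -> px y = px x /\ py y = py x.
Proof.
  intros [_ Hl]. destruct (Hl (Rabs (px x) + Rabs (py x) + 2)) as [l Hin].
  destruct (list_sep x l) as [M [HM HMl]].
  exists (Rmin 1 M). split. apply Rmin_pos; lra.
  intros y Hy Hs. pose proof (Rmin_l 1 M). pose proof (Rmin_r 1 M).
  apply HMl; [|lra]. apply Hin; auto.
  assert (Rabs (px x - px y) < 1) by (apply (sq_abs _ (sq x y)); unfold sq in *; simpl; try lra; pose proof (pow2_ge_0 (px x - px y)); pose proof (pow2_ge_0 (py x - py y)); lra).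
  assert (Rabs (py x - py y) < 1) by (apply (sq_abs _ (sq x y)); unfold sq in *; simpl; try lra; pose proof (pow2_ge_0 (px x - px y)); pose proof (pow2_ge_0 (py x - py y)); lra).
  eapply Rle_trans. apply sqrt_sum_le.
  pose proof (Rabs_triang (px x) (px y - px x)).
  pose proof (Rabs_triang (py x) (py y - py x)).
  rewrite (Rabs_minus_sym (px y)) in H3. rewrite (Rabs_minus_sym (py y)) in H4.
  replace (px x + (px y - px x)) with (px y) in * by ring.
  replace (py x + (py y - py x)) with (py y) in * by ring. lra.
Qed.

Lemma polar a c : 0 < a ->
  sqrt (a^2 + c^2) * cos (atan (c/a)) = a /\ sqrt (a^2 + c^2) * sin (atan (c/a)) = c.
Proof.
  intros Ha. rewrite cos_atan, sin_atan.
  assert (E : a^2 + c^2 = a^2 * (1 + (c/a)²)) by (unfold Rsqr; field; lra).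
  assert (P : 0 < 1 + (c/a)²) by (pose proof (Rle_0_sqr (c/a)); lra).
  rewrite E, sqrt_mult_alt by (apply pow2_ge_0).
  rewrite sqrt_pow2 by lra.
  assert (0 < sqrt (1 + (c / a)²)) by (apply sqrt_lt_R0; lra).
  split; field; lra.
Qed.

Lemma rep th vx vy : 0 < vx * cos th + vy * sin th ->
  let a := vx * cos th + vy * sin th in let c := - vx * sin th + vy * cos th in
  exists r, 0 < r /\ vx = r * cos (th + atan (c/a)) /\ vy = r * sin (th + atan (c/a)).
Proof.
  intros Ha a c. change (0 < a) in Ha. destruct (polar a c Ha) as [H1 H2].
  exists (sqrt (a^2 + c^2)). split.
  { apply sqrt_lt_R0. pose proof (pow2_ge_0 c). assert (0 < a^2) by (apply pow_lt; lra). lra. }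
  rewrite cos_plus, sin_plus. pose proof (cos_sin_1 th).
  split.
  - transitivity (cos th * (sqrt (a ^ 2 + c ^ 2) * cos (atan (c / a))) - sin th * (sqrt (a ^ 2 + c ^ 2) * sin (atan (c / a)))); [|ring].
    rewrite H1, H2. unfold a, c.
    transitivity (vx * (cos th ^ 2 + sin th ^ 2)); [rewrite H; ring| ring].
  - transitivity (sin th * (sqrt (a ^ 2 + c ^ 2) * cos (atan (c / a))) + cos th * (sqrt (a ^ 2 + c ^ 2) * sin (atan (c / a)))); [|ring].
    rewrite H1, H2. unfold a, c.
    transitivity (vy * (cos th ^ 2 + sin th ^ 2)); [rewrite H; ring| ring].
Qed.

Lemma atan_small e y : 0 < e < PI/2 -> Rabs y < tan e -> Rabs (atan y) < e.
Proof.
  intros He Hy. pose proof PI_RGT_0.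
  assert (atan (tan e) = e) by (apply atan_tan; lra).
  assert (atan y < e) by (rewrite <- H0; apply atan_increasing; pose proof (Rle_abs y); lra).
  assert (- e < atan y).
  { rewrite <- H0. rewrite <- atan_opp. apply atan_increasing. pose proof (Rabs_pos y).
    rewrite <- Rabs_Ropp in Hy. pose proof (Rle_abs (-y)); lra. }
  apply Rabs_def1; lra.
Qed.

Lemma cos_shiftPI t s : (s = 1 \/ s = -1) -> cos (t + s * PI) = - cos t /\ sin (t + s * PI) = - sin t.
Proof.
  intros [-> | ->].
  - rewrite Rmult_1_l. split; [apply neg_cos|apply neg_sin].
  - replace (t + -1 * PI) with (t - PI) by ring. rewrite cos_minus, sin_minus, cos_PI, sin_PI.
    split; ring.
Qed.

Lemma abs_lin w1 w2 c1 c2 rho : Rabs w1 < rho -> Rabs w2 < rho -> -1 <= c1 <= 1 -> -1 <= c2 <= 1 ->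
  Rabs (w1 * c1 + w2 * c2) < 2 * rho.
Proof.
  intros. eapply Rle_lt_trans. apply Rabs_triang. rewrite !Rabs_mult.
  assert (Rabs c1 <= 1) by (apply Rabs_le; lra). assert (Rabs c2 <= 1) by (apply Rabs_le; lra).
  pose proof (Rabs_pos w1); pose proof (Rabs_pos w2); pose proof (Rabs_pos c1); pose proof (Rabs_pos c2).
  nra.
Qed.

Lemma geo eps (x x1 : MP) d rho s u1c :
  0 < eps < PI/2 -> 0 < d -> 0 < rho -> rho <= d/4 -> rho * 4 <= d * tan (eps/2) ->
  2 * PI * rho <= eps/4 -> (s = 1 \/ s = -1) ->
  2 * PI * u1c = 2 * PI * mk x + s * PI - s * (eps/4) ->
  Rabs (px x1 - (px x + d * cos (2*PI*mk x))) < rho ->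
  Rabs (py x1 - (py x + d * sin (2*PI*mk x))) < rho ->
  Rabs (mk x1 - u1c) < rho ->
  in_coneP eps x x1 /\ in_coneP eps x1 x /\ sq x x1 < 3 * d^2.
Proof.
  intros He Hd Hr Hr1 Hr2 Hr3 Hs Hu Hx Hy Hm.
  set (th := 2*PI*mk x) in *.
  set (wx := px x1 - (px x + d * cos th)) in *.
  set (wy := py x1 - (py x + d * sin th)) in *.
  pose proof (COS_bound th). pose proof (SIN_bound th). pose proof (cos_sin_1 th).
  set (vx := px x1 - px x). set (vy := py x1 - py x).
  assert (Ea : vx * cos th + vy * sin th = d + (wx * cos th + wy * sin th)).
  { unfold vx, vy, wx, wy. transitivity (d * (cos th ^2 + sin th^2) + ((px x1 - (px x + d * cos th)) * cos th + (py x1 - (py x + d * sin th)) * sin th)); [ring|]. rewrite H1; ring. }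
  assert (Ec : - vx * sin th + vy * cos th = wx * (- sin th) + wy * cos th).
  { unfold vx, vy, wx, wy. ring. }
  pose proof (abs_lin wx wy (cos th) (sin th) rho Hx Hy H H0) as B1.
  assert (-1 <= - sin th <= 1) by lra.
  pose proof (abs_lin wx wy (- sin th) (cos th) rho Hx Hy H2 H) as B2.
  rewrite <- Ec in B2.
  assert (Hpos : 0 < vx * cos th + vy * sin th).
  { rewrite Ea. pose proof (Rle_abs (- (wx * cos th + wy * sin th))). rewrite Rabs_Ropp in H3. lra. }
  destruct (rep th vx vy Hpos) as [r [Hr0 [Hvx Hvy]]].
  set (a := vx * cos th + vy * sin th) in *.
  set (c := - vx * sin th + vy * cos th) in *.
  assert (Ha2 : d/2 <= a).
  { rewrite Ea. pose proof (Rle_abs (- (wx * cos th + wy * sin th))). rewrite Rabs_Ropp in H3. lra. }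
  pose proof PI_RGT_0 as HPI.
  assert (HT : 0 < tan (eps/2)) by (apply tan_gt_0; lra).
  assert (Hca : Rabs (c / a) < tan (eps / 2)).
  { unfold Rdiv. rewrite Rabs_mult, Rabs_inv, (Rabs_right a) by lra.
    apply (Rmult_lt_reg_r a); [lra|]. rewrite Rmult_assoc, Rinv_l, Rmult_1_r by lra.
    assert (tan (eps/2) * (d/2) <= tan (eps/2) * a) by (apply Rmult_le_compat_l; lra).
    lra. }
  pose proof (atan_small (eps/2) (c/a) ltac:(lra) Hca) as Hphi.
  set (phi := atan (c/a)) in *.
  split; [|split].
  - exists r, (th + phi). repeat split; auto.
    + replace (th + phi - 2 * PI * mk x) with phi by (unfold th; ring). lra.
    + unfold vx in Hvx; lra.
    + unfold vy in Hvy; lra.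
  - exists r, (th + phi + s * PI). destruct (cos_shiftPI (th + phi) s Hs) as [C1 S1].
    repeat split; auto.
    + assert (2 * PI * mk x1 = 2 * PI * u1c + 2 * PI * (mk x1 - u1c)) by ring.
      rewrite H3, Hu. fold th.
      apply Rabs_def2 in Hm. apply Rabs_def2 in Hphi.
      assert (2 * PI * (mk x1 - u1c) < 2 * PI * rho) by (apply Rmult_lt_compat_l; lra).
      assert (2 * PI * (- rho) < 2 * PI * (mk x1 - u1c)) by (apply Rmult_lt_compat_l; lra).
      apply Rabs_def1; destruct Hs as [-> | ->]; lra.
    + rewrite C1. unfold vx in Hvx; lra.
    + rewrite S1. unfold vy in Hvy; lra.
  - unfold sq. replace ((px x - px x1) ^ 2 + (py x - py x1) ^ 2) with (vx^2 + vy^2) by (unfold vx, vy; ring).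
    replace (vx ^ 2 + vy ^ 2) with (d^2 * (cos th ^ 2 + sin th ^ 2) + 2 * d * (wx * cos th + wy * sin th) + (wx^2 + wy^2))
      by (unfold vx, vy, wx, wy; ring).
    rewrite H1.
    pose proof (Rle_abs (wx * cos th + wy * sin th)).
    assert (wx^2 < rho^2) by (rewrite <- pow2_abs; pose proof (Rabs_pos wx); nra).
    assert (wy^2 < rho^2) by (rewrite <- pow2_abs; pose proof (Rabs_pos wy); nra).
    assert (2 * d * (wx * cos th + wy * sin th) <= 2 * d * (2*rho)) by (apply Rmult_le_compat_l; lra).
    nra.
Qed.

Lemma ball1 (c : MP) rho xs : 0 < rho -> in_ball 1 (fun _ => c) rho xs ->
  Rabs (px (xs O) - px c) < rho /\ Rabs (py (xs O) - py c) < rho /\ Rabs (mk (xs O) - mk c) < rho.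
Proof.
  intros Hr H. unfold in_ball in H. simpl in H. unfold dist3sq in H.
  pose proof (pow2_ge_0 (px (xs O) - px c)). pose proof (pow2_ge_0 (py (xs O) - py c)).
  pose proof (pow2_ge_0 (mk (xs O) - mk c)).
  repeat split; eapply sq_abs; try eassumption; lra.
Qed.

Lemma sq_tri x y w : sq x w <= 2 * sq y w + 2 * sq y x.
Proof.
  unfold sq.
  pose proof (pow2_ge_0 ((px y - px w) + (px y - px x))).
  pose proof (pow2_ge_0 ((py y - py w) + (py y - py x))).
  replace (px x - px w) with ((px y - px w) - (px y - px x)) by ring.
  replace (py x - py w) with ((py y - py w) - (py y - py x)) by ring.
  nra.
Qed.

Theorem proposition5p3 :
  forall eps : R, 0 < eps < PI / 2 ->
  forall phi : MP -> Prop, Cprime eps phi -> k_looping eps 1 phi.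
Proof.
  intros eps He phi Hphi. split; auto. intros x Hx.
  destruct Hphi as [Hcfg Hh].
  assert (Hu : 0 <= mk x <= 1) by (apply (proj1 Hcfg); auto).
  destruct (sep phi x Hcfg) as [M [HM HMs]].
  pose proof PI_RGT_0 as HPI.
  set (d := Rmin 1 M / 8).
  assert (Hd : 0 < d) by (unfold d; pose proof (Rmin_pos 1 M ltac:(lra) HM); lra).
  assert (Hd2 : 64 * d^2 <= M).
  { unfold d. pose proof (Rmin_l 1 M). pose proof (Rmin_r 1 M). pose proof (Rmin_pos 1 M ltac:(lra) HM). nra. }
  set (T := tan (eps/2)).
  assert (HT : 0 < T) by (apply tan_gt_0; lra).
  set (g := eps / (8 * PI)).
  assert (Hg : 0 < g /\ g < 1/4 /\ 2 * PI * g = eps/4).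
  { unfold g. split; [apply Rdiv_lt_0_compat; lra|]. split; [|field; lra].
    apply (Rmult_lt_reg_r (8*PI)); [lra|]. unfold Rdiv. rewrite Rmult_assoc, Rinv_l by lra. lra. }
  set (rho := Rmin g (Rmin (d/4) (d*T/4))).
  assert (Hrho : 0 < rho /\ rho <= g /\ rho <= d/4 /\ rho <= d*T/4).
  { unfold rho. pose proof (Rmin_l g (Rmin (d/4) (d*T/4))). pose proof (Rmin_r g (Rmin (d/4) (d*T/4))).
    pose proof (Rmin_l (d/4) (d*T/4)). pose proof (Rmin_r (d/4) (d*T/4)).
    assert (0 < d * T) by nra.
    repeat split; try lra. repeat apply Rmin_pos; lra. }
  assert (Hs : exists s u1c, (s = 1 \/ s = -1) /\ 2 * PI * u1c = 2 * PI * mk x + s * PI - s * (eps/4)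
              /\ g <= u1c <= 1 - g).
  { destruct (Rle_dec (mk x) (1/2)).
    - exists 1, (mk x + 1/2 - g). split; [auto|]. split; [|lra]. nra.
    - exists (-1), (mk x - 1/2 + g). split; [auto|]. split; [|lra]. nra. }
  destruct Hs as [s [u1c [Hs1 [Hs2 Hs3]]]].
  set (c := mkMP (px x + d * cos (2*PI*mk x)) (py x + d * sin (2*PI*mk x)) u1c).
  exists (fun _ => c), rho. split.
  { split; [lra|]. intros xs Hb i Hi. assert (i = O) by lia. subst i.
    destruct (ball1 c rho xs ltac:(lra) Hb) as [_ [_ H3]]. simpl in H3.
    apply Rabs_def2 in H3. lra. }
  intros xs Hb. cbv zeta. intros HC'.
  destruct (ball1 c rho xs ltac:(lra) Hb) as [B1 [B2 B3]]. simpl in B1, B2, B3.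
  set (x1 := xs O) in *.
  assert (2 * PI * rho <= eps/4) by (destruct Hg as [_ [_ Hg]]; rewrite <- Hg; apply Rmult_le_compat_l; lra).
  destruct (geo eps x x1 d rho s u1c He Hd ltac:(lra) ltac:(lra) ltac:(unfold T in Hrho; lra)
     ltac:(lra) Hs1 Hs2 B1 B2 B3) as [Cx [Cx1 Hsq]].
  set (P := add_pts phi 1 xs) in *.
  assert (Px : P x) by (left; auto).
  assert (Px1 : P x1) by (right; exists O; split; [lia|reflexivity]).
  assert (Pcase : forall y, P y -> phi y \/ y = x1).
  { intros y [Hy|[i [Hi ->]]]; [left; auto| right]. assert (i = O) by lia. subst; reflexivity. }
  destruct HC' as [_ HC'].
  assert (Hhx : is_h eps P x x1).
  { destruct (HC' x Px) as [y Hy].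
    destruct (classic (y = x1)) as [->|n]; auto. exfalso.
    destruct Hy as [Py [Cy Hyl]].
    pose proof (ldist_lt _ _ _ _ (Hyl x1 Px1 Cx (fun e => n (eq_sym e)))).
    destruct (Pcase y Py) as [Hy|]; [|contradiction].
    pose proof (cone_sq _ _ _ Cy) as Q2.
    assert (Q3 : sq x y < M) by lra.
    destruct (HMs y Hy Q3) as [E1 E2]. unfold sq in Q2. rewrite E1, E2 in Q2. lra. }
  assert (Hhx1 : is_h eps P x1 x).
  { destruct (HC' x1 Px1) as [w Hw].
    destruct (classic (w = x)) as [->|n]; auto. exfalso.
    destruct Hw as [Pw [Cw Hwl]].
    pose proof (ldist_lt _ _ _ _ (Hwl x Px Cx1 (fun e => n (eq_sym e)))) as Q1.
    destruct (Pcase w Pw) as [Hw|Ew].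
    2: { subst w. pose proof (cone_sq _ _ _ Cw) as Q2. unfold sq in Q2. ring_simplify in Q2. lra. }
    pose proof (sq_tri x x1 w) as Q4.
    assert (Q5 : sq x1 x = sq x x1) by (unfold sq; ring).
    assert (Q3 : sq x w < M) by lra.
    destruct (HMs w Hw Q3) as [E1 E2]. unfold sq in Q1. rewrite E1, E2 in Q1. lra. }
  assert (Fx : forall y, For eps P x y -> in_new x 1 xs y).
  { intros y Hy. destruct (for_two eps P x x1 y Hhx Hhx1 Hy) as [Ey|Ey]; subst y.
    left; auto. right. exists O; split; [lia|reflexivity]. }
  assert (Fx1 : forall y, For eps P x1 y -> in_new x 1 xs y).
  { intros y Hy. destruct (for_two eps P x1 x y Hhx1 Hhx Hy) as [Ey|Ey]; subst y.
    right. exists O; split; [lia|reflexivity]. left; auto. }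
  split; [exact Fx|split].
  - intros i Hi. assert (i = O) by lia. subst i. fold x1. split; auto.
    eapply conn_fwd. apply conn_refl. exact Px. exact Hhx.
  - intros y z z' Hy _ Hz Hz' Hne.
    destruct Hz' as [Pz' [Cz' Hz'l]].
    destruct (Pcase z' Pz') as [Hz1| ->].
    + exfalso. apply Hne. eapply h_uniq; [|exact Hz].
      split; [auto|split; auto]. intros w Hw Cw Nw. apply Hz'l; auto. left; auto.
    + split. split; auto. eapply For_step. apply For_refl. exact Hhx1.
      right. exists O; split; [lia|reflexivity].
Qed.
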